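(* Let $D$ be a crossing optimal normalized 2-page book drawing of $K_n$. For each integer $j$ with $0\le j\le\lfloor n/2\rfloor-2$, let $D_j$ be the drawing of $K_{n-j}$ obtained from $D$ by deleting the $j$ rightmost vertices $n-j+1,\dots,n$ and their incident edges. Then \[ E_{\le\le k}(D_j)=3\binom{k+3}3\quad\text{for all }0\le k\le\lfloor n/2\rfloor-2-j. \]
   Context: Normalized 2-page book drawing of $K_n$: vertices $(1,0),\dots,(n,0)$ labelled $1,\dots,n$; edges $i(i+1)$ on the spine; edge $1n$ in the upper half-plane; every other edge $ij$ a semicircle over $[i,j]$ in the upper or lower half-plane. Crossing optimal: exactly $Z(n)=\frac14\lfloor\frac n2\rfloor\lfloor\frac{n-1}2\rfloor\lfloor\frac{n-2}2\rfloor\lfloor\frac{n-3}2\rfloor$ crossings. For a good drawing $D$ of $K_m$: for distinct vertices $p,q,r$, $r$ is on the left (right) of $\overrightarrow{pq}$ if the triangle with edges $pq,qr,rp$ traced in order $p,q,r$ is counterclockwise (clockwise); an edge is a $k$-edge if exactly $k$ of the other $m-2$ vertices lie on one side of it; each edge has a unique such index in $\{0,\dots,\lfloor m/2\rfloor-1\}$, $E_k(D)$ counts edges with index $k$, and $E_{\le\le k}(D)=\sum_{i=0}^k(k+1-i)E_i(D)$. *)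

(* Defs.v *)
From mathcomp Require Import all_boot.
Set Implicit Arguments. Unset Strict Implicit. Unset Printing Implicit Defensive.

(* A normalized 2-page book drawing of K_n, vertices 1..n on the x-axis.
   [page a b] (for 1 <= a < b <= n, b - a >= 2) is [true] iff the semicircle
   edge ab lies in the UPPER half-plane, [false] iff in the lower one.
   Values of [page] at spine edges (b = a+1) or outside the range are
   irrelevant (never used).  Normalization: [page 1 n = true]. *)
Definition pages := nat -> nat -> bool.

(* Number of crossings: two semicircles cross iff they lie on the same page
   and their endpoints interleave a < c < b < d (spine edges and edge 1n
   never take part in such interleavings). *)
Definition cr (n : nat) (page : pages) : nat :=
  \sum_(1 <= a < n.+1) \sum_(a.+1 <= c < n.+1) \sum_(c.+1 <= b < n.+1)
    \sum_(b.+1 <= d < n.+1) nat_of_bool (page a b == page c d).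

Definition Z (n : nat) : nat :=
  (n./2 * (n.-1)./2 * (n - 2)./2 * (n - 3)./2) %/ 4.

(* The triangle's longest edge joins min and max of {p,q,r}; for a < b < c the
   traversal a -> b -> c is counterclockwise iff edge ac is in the upper page.
   Cyclic shifts preserve and reversals flip the orientation. *)
Definition ccw (page : pages) (p q r : nat) : bool :=
  let lo := minn p (minn q r) in
  let hi := maxn p (maxn q r) in
  let cyc := [|| (p < q < r), (q < r < p) | (r < p < q)] in
  cyc == page lo hi.

Definition on_left (page : pages) (p q r : nat) : bool := ccw page p q r.

Definition left_count (m : nat) (page : pages) (p q : nat) : nat :=
  \sum_(1 <= r < m.+1 | (r != p) && (r != q)) nat_of_bool (on_left page p q r).

Definition edge_index (m : nat) (page : pages) (p q : nat) : nat :=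
  minn (left_count m page p q) (m - 2 - left_count m page p q).

Definition E (m : nat) (page : pages) (i : nat) : nat :=
  \sum_(1 <= p < m.+1) \sum_(p.+1 <= q < m.+1)
     nat_of_bool (edge_index m page p q == i).

Definition Eleqleq (m : nat) (page : pages) (k : nat) : nat :=
  \sum_(0 <= i < k.+1) (k.+1 - i) * E m page i.

(* Main.v *)
Require Import Defs.
From mathcomp Require Import all_boot zify ssralg ring.
Set Implicit Arguments. Unset Strict Implicit. Unset Printing Implicit Defensive.
Set Warnings "-notation-overridden".

Section Ccw.
Variable page : pages.
Ltac ccwt := let h := fresh in move=> h; rewrite /ccw;
  (have -> : minn _ (minn _ _) = _ by (apply/eqP; lia));
  (have -> : maxn _ (maxn _ _) = _ by (apply/eqP; lia)).
Lemma ccw1 x y z : x < y < z -> ccw page x y z = page x z.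
Proof. move=> h; rewrite /ccw.
have -> : minn x (minn y z) = x by lia.
have -> : maxn x (maxn y z) = z by lia.
have -> : [|| x < y < z, y < z < x | z < x < y] = true by lia. by []. Qed.
Lemma ccw2 x y z : x < y < z -> ccw page y z x = page x z.
Proof. move=> h; rewrite /ccw.
have -> : minn y (minn z x) = x by lia.
have -> : maxn y (maxn z x) = z by lia.
have -> : [|| y < z < x, z < x < y | x < y < z] = true by lia. by []. Qed.
Lemma ccw3 x y z : x < y < z -> ccw page z x y = page x z.
Proof. move=> h; rewrite /ccw.
have -> : minn z (minn x y) = x by lia.
have -> : maxn z (maxn x y) = z by lia.
have -> : [|| z < x < y, x < y < z | y < z < x] = true by lia. by []. Qed.
Lemma ccw4 x y z : x < y < z -> ccw page x z y = ~~ page x z.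
Proof. move=> h; rewrite /ccw.
have -> : minn x (minn z y) = x by lia.
have -> : maxn x (maxn z y) = z by lia.
have -> : [|| x < z < y, z < y < x | y < x < z] = false by lia. by case: (page x z). Qed.
Lemma ccw5 x y z : x < y < z -> ccw page y x z = ~~ page x z.
Proof. move=> h; rewrite /ccw.
have -> : minn y (minn x z) = x by lia.
have -> : maxn y (maxn x z) = z by lia.
have -> : [|| y < x < z, x < z < y | z < y < x] = false by lia. by case: (page x z). Qed.
Lemma ccw6 x y z : x < y < z -> ccw page z y x = ~~ page x z.
Proof. move=> h; rewrite /ccw.
have -> : minn z (minn y x) = x by lia.
have -> : maxn z (maxn y x) = z by lia.
have -> : [|| z < y < x, y < x < z | x < z < y] = false by lia. by case: (page x z). Qed.
End Ccw.

Lemma W_lemma (b : nat -> bool) s n (h : nat -> nat) :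
  \sum_(s <= q < s + n) h (\sum_(q.+1 <= r < s + n) b r + (q - s) * ~~ b q)
  = \sum_(0 <= v < n) h v.
Proof.
elim: n h => [|n IH] h; first by rewrite addn0 !big_geq.
rewrite addnS big_nat_recr ?leq_addr //=.
rewrite (@big_geq _ _ _ (s+n).+1 (s+n).+1) // add0n; have -> : s + n - s = n by lia.
have E : \sum_(s <= q < s + n)
     h (\sum_(q.+1 <= r < (s + n).+1) b r + (q - s) * ~~ b q)
   = \sum_(s <= q < s + n)
     h (b (s + n) + (\sum_(q.+1 <= r < s + n) b r + (q - s) * ~~ b q)).
  apply: eq_big_nat => q /andP[_ hq]; rewrite big_nat_recr //=; congr h; lia.
rewrite E; case: (b (s + n)) => /=.
- rewrite (IH (fun v => h v.+1)) big_nat_recl //= muln0.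
  by rewrite addnC.
- by rewrite IH big_nat_recr //= muln1.
Qed.

Lemma V_lemma (b : nat -> bool) n : forall s (h : nat -> nat),
  \sum_(s <= p < s + n) h (\sum_(s <= r < p) b r + (s + n - p.+1) * ~~ b p)
  = \sum_(0 <= v < n) h v.
Proof.
elim: n => [|n IH] s h; first by rewrite addn0 !big_geq.
rewrite big_ltn ?addnS ?ltnS ?leq_addr //.
rewrite (@big_geq _ _ _ s s) // add0n.
have -> : (s + n).+1 - s.+1 = n by lia.
have E : \sum_(s.+1 <= p < (s + n).+1)
    h (\sum_(s <= r < p) b r + ((s + n).+1 - p.+1) * ~~ b p)
  = \sum_(s.+1 <= p < s.+1 + n)
    h (b s + (\sum_(s.+1 <= r < p) b r + (s.+1 + n - p.+1) * ~~ b p)).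
  rewrite addSn; apply: eq_big_nat => p /andP[hp _].
  rewrite (big_ltn hp); congr h; lia.
rewrite E; case: (b s) => /=.
- by rewrite (IH _ (fun v => h v.+1)) big_nat_recl //= muln0.
- under eq_big_nat do rewrite add0n. by rewrite IH big_nat_recr //= muln1 addnC.
Qed.

Lemma sum_cond_nat (m n : nat) (P : pred nat) (F G : nat -> nat) :
  (forall i, m <= i < n -> (if P i then F i else 0) = G i) ->
  \sum_(m <= i < n | P i) F i = \sum_(m <= i < n) G i.
Proof. by move=> h; rewrite big_mkcond; apply: eq_big_nat. Qed.

Lemma lc_formula (page : pages) N p q : 1 <= p -> p < q -> q <= N ->
  left_count N page p q =
  \sum_(1 <= r < p) page r q + (q - p.+1) * ~~ page p q
  + \sum_(q.+1 <= r < N.+1) page p r.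
Proof.
move=> h1 h2 h3; rewrite /left_count big_mkcond /=.
rewrite (@big_cat_nat _ _ _ p 1 N.+1); [|lia|lia].
rewrite (@big_ltn _ _ _ p N.+1); last by lia.
rewrite (@big_cat_nat _ _ _ q p.+1 N.+1); [|lia|lia].
rewrite (@big_ltn _ _ _ q N.+1); last by lia.
have -> : (q != p) && (q != q) = false by lia. rewrite /= !add0n.
rewrite (@eq_big_nat _ _ _ 1 p _ (fun r => nat_of_bool (page r q))); last first.
  move=> r hr. have -> : (r != p) && (r != q) by lia.
  by rewrite /on_left ccw2 //; lia.
rewrite (@eq_big_nat _ _ _ p.+1 q _ (fun r => nat_of_bool (~~ page p q))); last first.
  move=> r hr. have -> : (r != p) && (r != q) by lia.
  by rewrite /on_left ccw4 //; lia.
rewrite (@eq_big_nat _ _ _ q.+1 N.+1 _ (fun r => nat_of_bool (page p r))); last first.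
  move=> r hr. have -> : (r != p) && (r != q) by lia.
  by rewrite /on_left ccw1 //; lia.
have -> : (p != p) && (p != q) = false by lia. by rewrite add0n sum_nat_const_nat addnA.
Qed.

Definition A (m : nat) (page : pages) (k : nat) : nat :=
  \sum_(1 <= p < m.+1) \sum_(p.+1 <= q < m.+1) (k - edge_index m page p q).

Lemma leq_sum_nat m n (F G : nat -> nat) :
  (forall i, m <= i < n -> F i <= G i) ->
  \sum_(m <= i < n) F i <= \sum_(m <= i < n) G i.
Proof.
move=> h; rewrite big_nat_cond [X in _ <= X]big_nat_cond.
by apply: leq_sum => i /andP[hi _]; apply: h.
Qed.

Lemma sum_bool_le a b (F : nat -> bool) : \sum_(a <= r < b) F r <= b - a.
Proof.
rewrite -[b - a]muln1 -sum_nat_const_nat; apply: leq_sum => i _; by case: (F i).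
Qed.

Lemma lc_le (page : pages) N p q : 1 <= p -> p < q -> q <= N ->
  left_count N page p q <= N - 2.
Proof.
move=> h1 h2 h3; rewrite lc_formula //.
have := sum_bool_le 1 p (fun r => page r q).
have := sum_bool_le q.+1 N.+1 (fun r => page p r).
case: (page p q) => /=; lia.
Qed.

Lemma count_le n x : x < n -> \sum_(0 <= v < n) (v <= x) = x.+1.
Proof.
elim: n => [|n IH] h //; rewrite big_nat_recr //=.
case: (ltngtP x n) => hx.
- by rewrite IH // addn0.
- lia.
- subst; rewrite addn1; congr _.+1.
  rewrite -[RHS]muln1 -[X in X * 1](subn0 n) -sum_nat_const_nat.
  apply: eq_big_nat => i hi; rewrite (_ : (i <= n) = true) //; lia.
Qed.

Lemma count_ge n y : y <= n -> \sum_(0 <= v < n) (y <= v) = n - y.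
Proof.
elim: n => [|n IH] h; first by rewrite big_geq //; lia.
rewrite big_nat_recr //=.
case: (leqP y n) => hy.
- rewrite IH //; lia.
- have -> : y = n.+1 by lia.
  rewrite subnn addn0; apply: big1_seq => i; rewrite mem_index_iota => /andP[_ hi].
  rewrite (_ : (n.+1 <= i) = false) //; lia.
Qed.

Lemma tri0 k : \sum_(0 <= v < k.+1) (k.+1 - v) = 'C(k.+2, 2).
Proof.
elim: k => [|k IH]; first by rewrite big_nat1.
rewrite big_nat_recl // subn0.
rewrite (@eq_big_nat _ _ _ 0 k.+1 _ (fun v => k.+1 - v)); last by move=> i _; rewrite subSS.
by rewrite IH [in RHS]binS bin1 addnC.
Qed.

Lemma tri k n : k.+1 <= n -> \sum_(0 <= v < n) (k.+1 - v) = 'C(k.+2, 2).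
Proof.
move=> h; rewrite (@big_cat_nat _ _ _ k.+1 0 n) //= tri0.
rewrite (_ : \sum_(k.+1 <= v < n) (k.+1 - v) = 0) ?addn0 //.
apply: big1_seq => i; rewrite mem_index_iota => /andP[_ hi]; lia.
Qed.

Lemma part1 (page : pages) M k : 2 * k + 4 <= M.+1 ->
  'C(k.+2, 2) + 'C(k.+2, 2) <=
  \sum_(1 <= p < M.+1) (k.+1 - edge_index M.+1 page p M.+1).
Proof.
move=> hk.
pose h v := k.+1 - minn v (M.+1 - 2 - v).
have HV := V_lemma (fun r => page r M.+1) M 1 h.
rewrite add1n in HV.
have -> : \sum_(1 <= p < M.+1) (k.+1 - edge_index M.+1 page p M.+1) =
   \sum_(1 <= p < M.+1) h (\sum_(1 <= r < p) page r M.+1 + (M.+1 - p.+1) * ~~ page p M.+1).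
  apply: eq_big_nat => p hp.
  rewrite /edge_index lc_formula; [|lia|lia|lia].
  by rewrite (@big_geq _ _ _ M.+2 M.+2) // addn0.
rewrite HV.
apply: (@leq_trans (\sum_(0 <= v < M) ((k.+1 - v) + (k.+1 - (M - 1 - v))))).
  rewrite big_split /= tri; last by lia.
  rewrite big_nat_rev /= add0n.
  rewrite (@eq_big_nat _ _ _ 0 M _ (fun v => k.+1 - v)) ?tri //; first by lia.
  move=> i hi; congr (_ - _); lia.
apply: leq_sum_nat => v hv; rewrite /h; lia.
Qed.

Lemma bimp (a b : bool) : (a -> b) -> (a : nat) <= b.
Proof. by case: a; case: b => // /(_ isT). Qed.

Lemma vert (page : pages) M k p : 1 <= p -> p <= k.+1 -> 2 * k + 4 <= M.+1 ->
  k.+2 - p <= \sum_(p.+1 <= q < M.+1) (left_count M page p q <= k)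
  /\ k.+2 - p <= \sum_(p.+1 <= q < M.+1) (M - 2 - left_count M page p q <= k).
Proof.
move=> h1 h2 hk.
have HW h := W_lemma (fun r => page p r) p.+1 (M - p) h.
have EM : p.+1 + (M - p) = M.+1 by lia.
rewrite EM in HW.
have LCq q : p.+1 <= q < M.+1 -> left_count M page p q =
   \sum_(1 <= r < p) page r q +
   (\sum_(q.+1 <= r < M.+1) page p r + (q - p.+1) * ~~ page p q).
  move=> hq; rewrite lc_formula; [|lia|lia|lia]; lia.
have Bq q : \sum_(1 <= r < p) page r q <= p - 1 := sum_bool_le 1 p _.
split.
- have := HW (fun v => nat_of_bool (v <= k.+1 - p)).
  rewrite count_le; last by lia.
  have -> : (k.+1 - p).+1 = k.+2 - p by lia.
  move=> <-; apply: leq_sum_nat => q hq; rewrite LCq //.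
  apply: bimp; have := Bq q; lia.
- have := HW (fun v => nat_of_bool (M - 2 - k <= v)).
  rewrite count_ge; last by lia.
  have -> : M - p - (M - 2 - k) = k.+2 - p by lia.
  move=> <-; apply: leq_sum_nat => q hq; rewrite LCq //.
  apply: bimp; lia.
Qed.

Lemma lc_succ (page : pages) M p q : 1 <= p -> p < q -> q <= M ->
  left_count M.+1 page p q = left_count M page p q + page p M.+1.
Proof.
move=> h1 h2 h3; rewrite !lc_formula; [|lia|lia|lia|lia|lia|lia].
rewrite big_nat_recr /=; [lia|lia].
Qed.

Lemma ptw (page : pages) M k p q : 1 <= p -> p < q -> q <= M -> 2 * k + 4 <= M.+1 ->
  k.+1 - edge_index M.+1 page p q = (k - edge_index M page p q) +
   (if page p M.+1 then nat_of_bool (M - 2 - left_count M page p q <= k)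
    else nat_of_bool (left_count M page p q <= k)).
Proof.
move=> h1 h2 h3 hk; rewrite /edge_index lc_succ //.
have := lc_le page h1 h2 h3.
case: (page p M.+1) => /=; case: leqP => /=; lia.
Qed.

Lemma tri1 k : \sum_(1 <= p < k.+2) (k.+2 - p) = 'C(k.+2, 2).
Proof.
rewrite big_add1 /= -tri0; apply: eq_big_nat => i _; by rewrite subSS.
Qed.

Lemma step (page : pages) M k : 2 * k + 4 <= M.+1 ->
  A M page k + 3 * 'C(k.+2, 2) <= A M.+1 page k.+1.
Proof.
move=> hk; rewrite /A.
rewrite (@big_nat_recr _ _ _ M.+1 1) //= (@big_geq _ _ _ M.+2 M.+2) // addn0.
rewrite [X in _ <= X](@eq_big_nat _ _ _ 1 M.+1 _ (fun p =>
   \sum_(p.+1 <= q < M.+1) ((k - edge_index M page p q) +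
     (if page p M.+1 then nat_of_bool (M - 2 - left_count M page p q <= k)
    else nat_of_bool (left_count M page p q <= k)))
   + (k.+1 - edge_index M.+1 page p M.+1))); last first.
  move=> p hp; rewrite big_nat_recr /=; last by lia.
  congr (_ + _); apply: eq_big_nat => q hq; apply: ptw; lia.
rewrite big_split /=.
have P1 := part1 page hk.
rewrite [X in _ <= X + _](@eq_big_nat _ _ _ 1 M.+1 _ (fun p =>
   \sum_(p.+1 <= q < M.+1) (k - edge_index M page p q) +
   \sum_(p.+1 <= q < M.+1)
     (if page p M.+1 then nat_of_bool (M - 2 - left_count M page p q <= k)
    else nat_of_bool (left_count M page p q <= k)))); last first.
  by move=> p hp; rewrite big_split.
rewrite big_split /=.
set I := \sum_(1 <= i < M.+1) \sum_(i.+1 <= q < M.+1)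
        (if page i M.+1 then nat_of_bool (M - 2 - left_count M page i q <= k)
         else nat_of_bool (left_count M page i q <= k)).
suff P2 : 'C(k.+2, 2) <= I.
  have -> : 3 * 'C(k.+2, 2) = 'C(k.+2, 2) + ('C(k.+2, 2) + 'C(k.+2, 2)) by lia.
  lia.
rewrite /I (@big_cat_nat _ _ _ k.+2 1 M.+1) /=; [|lia|lia].
apply: leq_trans (leq_addr _ _).
rewrite -tri1; apply: leq_sum_nat => p hp.
have [V1 V2] := @vert page M k p ltac:(lia) ltac:(lia) hk.
by case: (page p M.+1).
Qed.
Definition S4 n (G : nat -> nat -> nat -> nat -> nat) :=
  \sum_(1 <= a < n.+1) \sum_(1 <= b < n.+1) \sum_(1 <= c < n.+1)
    \sum_(1 <= d < n.+1) G a b c d.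

Lemma S4_ext n G1 G2 : (forall a b c d, G1 a b c d = G2 a b c d) -> S4 n G1 = S4 n G2.
Proof.
move=> h; rewrite /S4; apply: eq_bigr => a _; apply: eq_bigr => b _;
apply: eq_bigr => c _; apply: eq_bigr => d _; exact: h.
Qed.

Lemma S4_add n G1 G2 : S4 n (fun a b c d => G1 a b c d + G2 a b c d) = S4 n G1 + S4 n G2.
Proof.
rewrite /S4 -big_split; apply: eq_bigr => a _; rewrite -big_split;
apply: eq_bigr => b _; rewrite -big_split; apply: eq_bigr => c _; by rewrite -big_split.
Qed.

Lemma swap12 n G : S4 n G = S4 n (fun a b c d => G b a c d).
Proof. by rewrite /S4 exchange_big_nat. Qed.
Lemma swap23 n G : S4 n G = S4 n (fun a b c d => G a c b d).
Proof. rewrite /S4; apply: eq_bigr => a _; by rewrite exchange_big_nat. Qed.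
Lemma swap34 n G : S4 n G = S4 n (fun a b c d => G a b d c).
Proof. rewrite /S4; apply: eq_bigr => a _; apply: eq_bigr => b _; by rewrite exchange_big_nat. Qed.

Lemma full_nat x n (G : nat -> nat) :
  \sum_(x.+1 <= y < n.+1) G y = \sum_(1 <= y < n.+1) (x < y) * G y.
Proof.
rewrite (@big_nat_widenl _ _ _ x.+1 1) // big_mkcond /=.
by apply: eq_bigr => y _; case: (x < y); rewrite ?mul1n ?mul0n.
Qed.

Definition Q4 n (F : nat -> nat -> nat -> nat -> nat) :=
  \sum_(1 <= a < n.+1) \sum_(a.+1 <= b < n.+1) \sum_(b.+1 <= c < n.+1)
    \sum_(c.+1 <= d < n.+1) F a b c d.

Lemma Q4_S4 n F : Q4 n F = S4 n (fun a b c d => [&& a < b, b < c & c < d] * F a b c d).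
Proof.
rewrite /Q4 /S4; apply: eq_bigr => a _.
rewrite full_nat; apply: eq_bigr => b _.
rewrite full_nat big_distrr; apply: eq_bigr => c _.
rewrite full_nat !big_distrr; apply: eq_bigr => d _ /=.
by case: (a < b); case: (b < c); case: (c < d); rewrite /= ?mul0n ?mul1n.
Qed.

Lemma ind_split p q r s :
  nat_of_bool ((p < q) && (r < s) && (r != p) && (r != q) && (s != p) && (s != q))
  = [&& p < q, q < r & r < s] + [&& p < r, r < q & q < s] + [&& p < r, r < s & s < q]
    + [&& r < p, p < q & q < s] + [&& r < p, p < s & s < q] + [&& r < s, s < p & p < q].
Proof.
case: (ltngtP p q) => ?; case: (ltngtP p r) => ?; case: (ltngtP p s) => ?;
case: (ltngtP q r) => ?; case: (ltngtP q s) => ?; case: (ltngtP r s) => ? /=; try lia.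
Qed.

Lemma DC n F :
  \sum_(1 <= p < n.+1) \sum_(p.+1 <= q < n.+1) \sum_(1 <= r < n.+1) \sum_(r.+1 <= s < n.+1)
     ((r != p) && (r != q) && (s != p) && (s != q)) * F p q r s
  = Q4 n (fun a b c d => F a b c d + F a c b d + F a d b c + F b c a d + F b d a c + F c d a b).
Proof.
have -> : \sum_(1 <= p < n.+1) \sum_(p.+1 <= q < n.+1) \sum_(1 <= r < n.+1) \sum_(r.+1 <= s < n.+1)
     ((r != p) && (r != q) && (s != p) && (s != q)) * F p q r s
  = S4 n (fun p q r s =>
     ((p < q) && (r < s) && (r != p) && (r != q) && (s != p) && (s != q)) * F p q r s).
  rewrite /S4; apply: eq_bigr => p _.
  rewrite full_nat; apply: eq_bigr => q _.
  rewrite big_distrr; apply: eq_bigr => r _.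
  rewrite full_nat !big_distrr; apply: eq_bigr => s _ /=.
  by case: (p < q); case: (r < s); rewrite /= ?mul0n ?mul1n ?andbF.
rewrite Q4_S4.
set T := fun a b c d => [&& a < b, b < c & c < d].
rewrite [in RHS](@S4_ext n _ (fun a b c d =>
   T a b c d * F a b c d + T a b c d * F a c b d + T a b c d * F a d b c +
   T a b c d * F b c a d + T a b c d * F b d a c + T a b c d * F c d a b));
  last by move=> a b c d; rewrite !mulnDr.
rewrite [in LHS](@S4_ext n _ (fun p q r s =>
   [&& p < q, q < r & r < s] * F p q r s + [&& p < r, r < q & q < s] * F p q r s
   + [&& p < r, r < s & s < q] * F p q r s + [&& r < p, p < q & q < s] * F p q r s
   + [&& r < p, p < s & s < q] * F p q r s + [&& r < s, s < p & p < q] * F p q r s));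
  last by move=> p q r s; rewrite ind_split !mulnDl.
rewrite !S4_add /T.
congr (_ + _ + _ + _ + _ + _).
- rewrite [RHS]swap23; apply: S4_ext => a b c d /=; congr (_ * _).
- rewrite [RHS]swap34 [RHS]swap23; apply: S4_ext => a b c d /=; congr (_ * _).
- rewrite [RHS]swap12 [RHS]swap23; apply: S4_ext => a b c d /=; congr (_ * _).
- rewrite [RHS]swap12 [RHS]swap34 [RHS]swap23; apply: S4_ext => a b c d /=; congr (_ * _).
- rewrite [RHS]swap23 [RHS]swap12 [RHS]swap34 [RHS]swap23; apply: S4_ext => a b c d /=; congr (_ * _).
Qed.

Lemma pairs n (y : nat -> bool) :
  \sum_(1 <= r < n.+1) \sum_(r.+1 <= s < n.+1) (y r && y s)
  = 'C(\sum_(1 <= r < n.+1) y r, 2).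
Proof.
elim: n => [|n IH]; first by rewrite !big_geq.
rewrite (@big_nat_recr _ _ _ n.+1 1) //= (@big_geq _ _ _ n.+2 n.+2) // addn0.
rewrite (@eq_big_nat _ _ _ 1 n.+1 _ (fun r =>
   \sum_(r.+1 <= s < n.+1) (y r && y s) + (y r && y n.+1))); last first.
  by move=> r hr; rewrite big_nat_recr //=; lia.
rewrite big_split /= IH.
rewrite [in RHS](@big_nat_recr _ _ _ n.+1 1) //=.
set Y := \sum_(1 <= r < n.+1) y r.
have -> : \sum_(1 <= i < n.+1) (y i && y n.+1) = y n.+1 * Y.
  rewrite /Y big_distrr /=; apply: eq_bigr => i _; by case: (y i); case: (y n.+1).
case: (y n.+1); rewrite /= ?mul1n ?mul0n ?addn0 //.
by rewrite addn1 binS bin1.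
Qed.

Lemma sum_eq1 n p : 1 <= p <= n -> \sum_(1 <= r < n.+1) (r == p) = 1.
Proof.
move=> hp; rewrite (@big_cat_nat _ _ _ p 1 n.+1) //=; [|lia|lia].
rewrite (@big_ltn _ _ _ p n.+1) //=; last by lia.
rewrite eqxx big1_seq ?add0n; last first.
  move=> i; rewrite mem_index_iota => /andP[_ hi]; rewrite (_ : (i == p) = false) //; lia.
rewrite big1_seq ?addn0 //.
move=> i; rewrite mem_index_iota => /andP[_ hi]; rewrite (_ : (i == p) = false) //; lia.
Qed.

Lemma count_neq n p q : 1 <= p -> p < q -> q <= n ->
  \sum_(1 <= r < n.+1) ((r != p) && (r != q)) = n - 2.
Proof.
move=> h1 h2 h3.
have E : \sum_(1 <= r < n.+1) 1 = \sum_(1 <= r < n.+1) ((r != p) && (r != q))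
   + \sum_(1 <= r < n.+1) (r == p) + \sum_(1 <= r < n.+1) (r == q).
  rewrite -!big_split; apply: eq_bigr => r _ /=.
  case: (eqVneq r p) => [->|hrp]; case: (eqVneq r q) => [hrq|hrq] //=; lia.
move: E; rewrite !sum_eq1 ?sum_nat_const_nat; lia.
Qed.

Lemma pair_lc (page : pages) n p q : 1 <= p -> p < q -> q <= n ->
  \sum_(1 <= r < n.+1) \sum_(r.+1 <= s < n.+1)
     ((r != p) && (r != q) && (s != p) && (s != q)) *
       (on_left page p q r == on_left page p q s)
  = 'C(left_count n page p q, 2) + 'C(n - 2 - left_count n page p q, 2).
Proof.
move=> h1 h2 h3.
pose P r := (r != p) && (r != q).
pose x r := on_left page p q r.
have -> : \sum_(1 <= r < n.+1) \sum_(r.+1 <= s < n.+1)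
     ((r != p) && (r != q) && (s != p) && (s != q)) * (x r == x s)
   = \sum_(1 <= r < n.+1) \sum_(r.+1 <= s < n.+1) ((P r && x r) && (P s && x s))
   + \sum_(1 <= r < n.+1) \sum_(r.+1 <= s < n.+1) ((P r && ~~ x r) && (P s && ~~ x s)).
  rewrite -big_split; apply: eq_bigr => r _; rewrite -big_split; apply: eq_bigr => s _ /=.
  rewrite /P; case: (r != p); case: (r != q); case: (s != p); case: (s != q);
  case: (x r); case: (x s) => //.
rewrite !pairs.
have L1 : \sum_(1 <= r < n.+1) (P r && x r) = left_count n page p q.
  rewrite /left_count [RHS]big_mkcond /=; apply: eq_bigr => r _; rewrite /P /x.
  by case: ((r != p) && (r != q)).
have L2 : \sum_(1 <= r < n.+1) (P r && ~~ x r) = n - 2 - left_count n page p q.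
  rewrite -L1 -(count_neq h1 h2 h3).
  have -> : \sum_(1 <= r < n.+1) ((r != p) && (r != q)) =
    \sum_(1 <= r < n.+1) (P r && x r) + \sum_(1 <= r < n.+1) (P r && ~~ x r).
    rewrite -big_split; apply: eq_bigr => r _ /=; rewrite /P.
    by case: (_ && _); case: (x r).
  lia.
by rewrite L1 L2.
Qed.

Lemma K4 (page : pages) a b c d : a < b -> b < c -> c < d ->
  nat_of_bool (on_left page a b c == on_left page a b d)
  + nat_of_bool (on_left page a c b == on_left page a c d)
  + nat_of_bool (on_left page a d b == on_left page a d c)
  + nat_of_bool (on_left page b c a == on_left page b c d)
  + nat_of_bool (on_left page b d a == on_left page b d c)
  + nat_of_bool (on_left page c d a == on_left page c d b)
  = 3 + (page a c == page b d).
Proof.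
move=> hab hbc hcd; rewrite /on_left.
rewrite (@ccw1 page a b c) ?hab ?hbc // (@ccw1 page a b d) ?hab; last by lia.
rewrite (@ccw4 page a b c) ?hab ?hbc // (@ccw1 page a c d) ?hcd; last by lia.
rewrite (@ccw4 page a b d) ?hab; last by lia.
rewrite (@ccw4 page a c d); last by lia.
rewrite (@ccw2 page a b c) ?hab ?hbc // (@ccw1 page b c d) ?hbc ?hcd //.
rewrite (@ccw2 page a b d) ?hab; last by lia.
rewrite (@ccw4 page b c d) ?hbc ?hcd //.
rewrite (@ccw2 page a c d) ?hcd; last by lia.
rewrite (@ccw2 page b c d) ?hbc ?hcd //.
by case: (page a c); case: (page a d); case: (page b d).
Qed.

Lemma Q4_ext n F G :
  (forall a b c d, 1 <= a -> a < b -> b < c -> c < d -> d <= n -> F a b c d = G a b c d) ->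
  Q4 n F = Q4 n G.
Proof.
move=> h; rewrite /Q4; apply: eq_big_nat => a ha; apply: eq_big_nat => b hb;
apply: eq_big_nat => c hc; apply: eq_big_nat => d hd; apply: h; lia.
Qed.

Lemma Q4_add n F G : Q4 n (fun a b c d => F a b c d + G a b c d) = Q4 n F + Q4 n G.
Proof.
rewrite /Q4 -big_split; apply: eq_bigr => a _; rewrite -big_split;
apply: eq_bigr => b _; rewrite -big_split; apply: eq_bigr => c _; by rewrite -big_split.
Qed.

Lemma npairs n : \sum_(1 <= p < n.+1) \sum_(p.+1 <= q < n.+1) 1 = 'C(n, 2).
Proof.
have := pairs n (fun _ => true); rewrite sum_nat_const_nat subn1 muln1 /= => <-.
by [].
Qed.

Lemma Q4_scale n k F : k * Q4 n F = Q4 n (fun a b c d => k * F a b c d).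
Proof.
rewrite /Q4 big_distrr; apply: eq_bigr => a _; rewrite big_distrr;
apply: eq_bigr => b _; rewrite big_distrr; apply: eq_bigr => c _; by rewrite big_distrr.
Qed.

Lemma Q4_one n : 6 * Q4 n (fun _ _ _ _ => 1) = 'C(n, 2) * 'C(n - 2, 2).
Proof.
rewrite Q4_scale.
rewrite (@Q4_ext n _ (fun _ _ _ _ => 1 + 1 + 1 + 1 + 1 + 1)) //.
rewrite -(DC n (fun _ _ _ _ => 1)).
rewrite -npairs big_distrl /=; apply: eq_big_nat => p hp.
rewrite big_distrl /=; apply: eq_big_nat => q hq.
rewrite mul1n.
have <- : \sum_(1 <= r < n.+1) ((r != p) && (r != q)) = n - 2 by apply: count_neq; lia.
rewrite -pairs; apply: eq_bigr => r _; apply: eq_bigr => s _.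
by rewrite muln1 !andbA.
Qed.

Lemma cross_id (page : pages) n :
  cr n page + 3 * Q4 n (fun _ _ _ _ => 1) =
  \sum_(1 <= p < n.+1) \sum_(p.+1 <= q < n.+1)
     ('C(left_count n page p q, 2) + 'C(n - 2 - left_count n page p q, 2)).
Proof.
rewrite (@eq_big_nat _ _ _ 1 n.+1 _ (fun p => \sum_(p.+1 <= q < n.+1)
  \sum_(1 <= r < n.+1) \sum_(r.+1 <= s < n.+1)
     ((r != p) && (r != q) && (s != p) && (s != q)) *
       (on_left page p q r == on_left page p q s))); last first.
  move=> p hp; apply: eq_big_nat => q hq; rewrite pair_lc //; lia.
rewrite DC.
rewrite [in RHS](@Q4_ext n _ (fun a b c d => 1 + (1 + (1 + nat_of_bool (page a c == page b d))))); last first.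
  move=> a b c d ha hab hbc hcd hd; by rewrite (K4 page hab hbc hcd).
rewrite (@Q4_add n (fun _ _ _ _ => 1) (fun a b c d => 1 + (1 + nat_of_bool (page a c == page b d)))).
rewrite (@Q4_add n (fun _ _ _ _ => 1) (fun a b c d => (1 + nat_of_bool (page a c == page b d)))).
rewrite (@Q4_add n (fun _ _ _ _ => 1) (fun a b c d => nat_of_bool (page a c == page b d))).
have -> : cr n page = Q4 n (fun a b c d => nat_of_bool (page a c == page b d)) by [].
by rewrite addnC !mulSn mul0n addn0 !addnA.
Qed.

Lemma bin2_2 x : 'C(x, 2) * 2 = x * x.-1.
Proof.
elim: x => [|x IH] //. rewrite binS bin1 mulnDl IH; case: x {IH} => //= x; lia.
Qed.
Lemma bin3_6 x : 'C(x, 3) * 6 = x * (x - 1) * (x - 2).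
Proof. have := bin_ffact x 3; rewrite !ffactnS ffactn0 => ->; lia. Qed.
Lemma bin4_24 x : 'C(x, 4) * 24 = x * (x - 1) * (x - 2) * (x - 3).
Proof. have := bin_ffact x 4; rewrite !ffactnS ffactn0 => ->; lia. Qed.

Lemma Zid n M Q : 1 <= M -> 2 * M + 2 <= n <= 2 * M + 3 ->
  6 * Q = 'C(n, 2) * 'C(n - 2, 2) ->
  Z n + 3 * Q = 'C(n, 2) * ('C(M, 2) + 'C(n - 2 - M, 2)) + 2 * (3 * 'C(M + 2, 4))
     + (n - 2 * M - 1) * (3 * 'C(M + 2, 3)).
Proof.
move=> hM hn hQ.
have [s hs] : exists s, M = s.+1 by exists M.-1; lia.
subst M.
have [e [he hne]] : exists e, e <= 1 /\ n = 2 * s + 4 + e by exists (n - 2 * s - 4); lia.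
subst n; clear hn hM.
have hZ : Z (2 * s + 4 + e) * 4 = (s + 2) * (s + 1 + e) * (s + 1) * (s + e).
  rewrite /Z.
  rewrite (_ : (2 * s + 4 + e)./2 = s + 2); last by lia.
  rewrite (_ : (2 * s + 4 + e).-1./2 = s + 1 + e); last by lia.
  rewrite (_ : (2 * s + 4 + e - 2)./2 = s + 1); last by lia.
  rewrite (_ : (2 * s + 4 + e - 3)./2 = s + e); last by lia.
  clear hQ; case: e he => [|[|//]] _.
  - rewrite (_ : (s + 2) * (s + 1 + 0) * (s + 1) * (s + 0) = 4 * ('C(s + 2, 2) * 'C(s + 1, 2))).
      by rewrite mulKn // mulnC.
    have := bin2_2 (s + 2); have := bin2_2 (s + 1); nia.
  - rewrite (_ : (s + 2) * (s + 1 + 1) * (s + 1) * (s + 1) = 4 * ('C(s + 2, 2) * 'C(s + 2, 2))).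
      by rewrite mulKn // mulnC.
    have := bin2_2 (s + 2); nia.
rewrite (_ : 2 * s + 4 + e - 2 - s.+1 = s + 1 + e); last by lia.
rewrite (_ : 2 * s + 4 + e - 2 * s.+1 - 1 = e + 1); last by lia.
rewrite (_ : 2 * s + 4 + e - 2 = 2 * s + 2 + e) in hQ; last by lia.
have h1 : 'C(2 * s + 4 + e, 2) * 2 = (2 * s + 4 + e) * (2 * s + 3 + e).
  by rewrite bin2_2; congr (_ * _); lia.
have h2 : 'C(2 * s + 2 + e, 2) * 2 = (2 * s + 2 + e) * (2 * s + 1 + e).
  by rewrite bin2_2; congr (_ * _); lia.
have h3 : 'C(s.+1, 2) * 2 = (s + 1) * s.
  by rewrite bin2_2; congr (_ * _); lia.
have h4 : 'C(s + 1 + e, 2) * 2 = (s + 1 + e) * (s + e).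
  by rewrite bin2_2; congr (_ * _); lia.
have h5 : 'C(s.+1 + 2, 4) * 24 = (s + 3) * (s + 2) * (s + 1) * s.
  by rewrite bin4_24; congr (_ * _ * _ * _); lia.
have h6 : 'C(s.+1 + 2, 3) * 6 = (s + 3) * (s + 2) * (s + 1).
  by rewrite bin3_6; congr (_ * _ * _); lia.
move: hZ hQ h1 h2 h3 h4 h5 h6.
move: (Z _) ('C(2 * s + 4 + e, 2)) ('C(2 * s + 2 + e, 2)) ('C(s.+1, 2)) ('C(s + 1 + e, 2))
  ('C(s.+1 + 2, 4)) ('C(s.+1 + 2, 3)) => z b1 b2 b3 b4 b5 b6.
move=> hZ hQ h1 h2 h3 h4 h5 h6.
apply/eqP; rewrite -(eqn_pmul2l (_ : 0 < 24)) //; apply/eqP.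
have -> : 24 * (z + 3 * Q) = 6 * (z * 4) + 3 * ((b1 * 2) * (b2 * 2)).
  have -> : 3 * ((b1 * 2) * (b2 * 2)) = 12 * (b1 * b2) by ring.
  by rewrite -hQ; ring.
have -> : 24 * (b1 * (b3 + b4) + 2 * (3 * b5) + (e + 1) * (3 * b6)) =
  6 * ((b1 * 2) * (b3 * 2)) + 6 * ((b1 * 2) * (b4 * 2)) + 6 * (b5 * 24)
  + 12 * (e + 1) * (b6 * 6) by ring.
rewrite hZ h1 h2 h3 h4 h5 h6.
case: e he {hZ h1 h2 h4} => [|[|//]] _; ring.
Qed.

Lemma edge_g n M i : i <= M -> 2 * M + 2 <= n <= 2 * M + 3 ->
  'C(i, 2) + 'C(n - 2 - i, 2) =
  'C(M, 2) + 'C(n - 2 - M, 2) + 2 * 'C(M - i, 2) + (n - 2 * M - 1) * (M - i).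
Proof.
move=> hi hn.
have h1 := bin2_2 i. have h2 := bin2_2 (n - 2 - i). have h3 := bin2_2 M.
have h4 := bin2_2 (n - 2 - M). have h5 := bin2_2 (M - i).
have [j hj] : exists j, M = i + j by exists (M - i); lia.
subst M.
have [e [he hne]] : exists e, e <= 1 /\ n = 2 * (i + j) + 2 + e by exists (n - 2 * (i + j) - 2); lia.
subst n.
move: h1 h2 h3 h4 h5.
rewrite (_ : 2 * (i + j) + 2 + e - 2 - i = i + 2 * j + e); last by lia.
rewrite (_ : 2 * (i + j) + 2 + e - 2 - (i + j) = i + j + e); last by lia.
rewrite (_ : i + j - i = j); last by lia.
rewrite (_ : 2 * (i + j) + 2 + e - 2 * (i + j) - 1 = e.+1); last by lia.
move: ('C(i, 2)) ('C(i + 2 * j + e, 2)) ('C(i + j, 2)) ('C(i + j + e, 2)) ('C(j, 2)) => b1 b2 b3 b4 b5.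
clear hn hi. case: e he => [|[|//]] _; case: i => [|i]; case: j => [|j] /=; nia.
Qed.

Lemma sum_tri_i N i : \sum_(0 <= t < N) (t.+1 - i) = 'C(N.+1 - i, 2).
Proof.
elim: N => [|N IH]; first by rewrite big_geq //; case: i => [|[|i]].
rewrite big_nat_recr //= IH.
case: (leqP i N.+1) => hi.
- rewrite (_ : N.+2 - i = (N.+1 - i).+1); last by lia.
  by rewrite binS bin1 addnC.
- rewrite (_ : N.+2 - i = 0); last by lia.
  rewrite (_ : N.+1 - i = 0); last by lia.
  by [].
Qed.

Definition D2 n (F : nat -> nat -> nat) := \sum_(1 <= p < n.+1) \sum_(p.+1 <= q < n.+1) F p q.

Lemma D2_ext n F G : (forall p q, 1 <= p -> p < q -> q <= n -> F p q = G p q) -> D2 n F = D2 n G.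
Proof.
move=> h; rewrite /D2; apply: eq_big_nat => p hp; apply: eq_big_nat => q hq; apply: h; lia.
Qed.

Lemma D2_add n F G : D2 n (fun p q => F p q + G p q) = D2 n F + D2 n G.
Proof. rewrite /D2 -big_split; apply: eq_bigr => p _; by rewrite -big_split. Qed.

Lemma D2_scale n k F : D2 n (fun p q => k * F p q) = k * D2 n F.
Proof. rewrite /D2 big_distrr; apply: eq_bigr => p _; by rewrite big_distrr. Qed.

Lemma D2_const n k : D2 n (fun _ _ => k) = k * 'C(n, 2).
Proof.
rewrite -npairs /D2 big_distrr; apply: eq_bigr => p _; rewrite big_distrr;
apply: eq_bigr => q _ /=; by rewrite muln1.
Qed.

Lemma D2_exch n N G : D2 n (fun p q => \sum_(0 <= t < N) G t p q) =
  \sum_(0 <= t < N) D2 n (G t).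
Proof.
rewrite /D2 [RHS]exchange_big_nat; apply: eq_bigr => p _.
by rewrite exchange_big_nat.
Qed.

Lemma idx_le (page : pages) n M p q : 1 <= p -> p < q -> q <= n -> n <= 2 * M + 3 ->
  edge_index n page p q <= M.
Proof. move=> h1 h2 h3 h4; rewrite /edge_index; have := lc_le page h1 h2 h3; lia. Qed.

Lemma sum_edges_g (page : pages) n M : 1 <= M -> 2 * M + 2 <= n <= 2 * M + 3 ->
  D2 n (fun p q => 'C(left_count n page p q, 2) + 'C(n - 2 - left_count n page p q, 2))
  = 'C(n, 2) * ('C(M, 2) + 'C(n - 2 - M, 2))
    + 2 * \sum_(0 <= t < M.-1) A n page t.+1 + (n - 2 * M - 1) * A n page M.
Proof.
move=> hM hn.
rewrite (@D2_ext n _ (fun p q => ('C(M, 2) + 'C(n - 2 - M, 2))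
   + 2 * \sum_(0 <= t < M.-1) (t.+1 - edge_index n page p q)
   + (n - 2 * M - 1) * (M - edge_index n page p q))); last first.
  move=> p q h1 h2 h3.
  rewrite sum_tri_i (_ : M.-1.+1 = M); last by lia.
  have hi := @idx_le page n M p q h1 h2 h3 ltac:(lia).
  rewrite -edge_g //.
  rewrite /edge_index; have := lc_le page h1 h2 h3.
  case: (leqP (left_count n page p q) (n - 2 - left_count n page p q)) => hl hle.
  + by [].
  + rewrite addnC; congr (_ + _); congr 'C(_, 2); lia.
rewrite !D2_add !D2_const D2_scale !D2_exch.
have hA k : D2 n (fun p q => k - edge_index n page p q) = A n page k by [].
rewrite hA; under eq_bigr do rewrite hA.
lia.
Qed.

Lemma sel N (F : nat -> nat) x :
  \sum_(0 <= i < N) F i * (x == i) = if x < N then F x else 0.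
Proof.
elim: N => [|N IH]; first by rewrite big_geq.
rewrite big_nat_recr //= IH.
case: (ltngtP x N) => h /=.
- by rewrite muln0 addn0 (_ : x < N.+1) //; lia.
- by rewrite muln0 addn0 (_ : x < N.+1 = false) //; lia.
- by subst x; rewrite ltnSn muln1.
Qed.

Lemma Eleqleq_A m (page : pages) k : Eleqleq m page k = A m page k.+1.
Proof.
rewrite /Eleqleq /E /A.
rewrite (@eq_big_nat _ _ _ 0 k.+1 _ (fun i => \sum_(1 <= p < m.+1) \sum_(p.+1 <= q < m.+1)
   (k.+1 - i) * (edge_index m page p q == i))); last first.
  move=> i _; rewrite big_distrr; apply: eq_bigr => p _; by rewrite big_distrr.
rewrite exchange_big_nat; apply: eq_bigr => p _.
rewrite exchange_big_nat; apply: eq_bigr => q _.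
rewrite sel; case: ifP => // h; lia.
Qed.

Lemma LB (page : pages) k : forall m, 2 * k + 4 <= m -> 3 * 'C(k.+3, 3) <= A m page k.+1.
Proof.
elim: k => [|k IH] [|M] hm //.
- have := @step page M 0 hm; rewrite !binn; lia.
- have h1 := IH M ltac:(lia).
  have h2 := @step page M k.+1 ltac:(lia).
  rewrite (binS k.+3 2); lia.
Qed.

Lemma sum_eq_ge N (f g : nat -> nat) : (forall t, t < N -> g t <= f t) ->
  \sum_(0 <= t < N) f t = \sum_(0 <= t < N) g t -> forall t, t < N -> f t = g t.
Proof.
elim: N => [|N IH] hle heq t ht //.
move: heq; rewrite !big_nat_recr //= => heq.
have hs : \sum_(0 <= t < N) g t <= \sum_(0 <= t < N) f t.
  apply: leq_sum_nat => i hi; apply: hle; lia.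
have hN := hle N (ltnSn N).
case: (ltngtP t N) => htN.
- apply: IH => //; [move=> i hi; apply: hle; lia | lia].
- lia.
- subst t; lia.
Qed.

Lemma hockey N : \sum_(0 <= t < N) 'C(t.+3, 3) = 'C(N.+3, 4).
Proof.
elim: N => [|N IH]; first by rewrite big_geq.
by rewrite big_nat_recr //= IH (binS N.+3 3).
Qed.

Lemma base (page : pages) n : 4 <= n -> cr n page = Z n ->
  forall t, t.+2 <= n./2 -> A n page t.+1 = 3 * 'C(t.+3, 3).
Proof.
move=> hn hcr.
pose M := n./2 - 1.
have hM : 1 <= M by rewrite /M; lia.
have hMn : 2 * M + 2 <= n <= 2 * M + 3 by rewrite /M; lia.
have E1 : cr n page + 3 * Q4 n (fun _ _ _ _ => 1) =
  D2 n (fun p q => 'C(left_count n page p q, 2) + 'C(n - 2 - left_count n page p q, 2))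
  := cross_id page n.
rewrite (sum_edges_g page hM hMn) hcr in E1.
have E2 := Zid hM hMn (Q4_one n).
have hk : 'C(M + 2, 4) = \sum_(0 <= t < M.-1) 'C(t.+3, 3).
  rewrite hockey; congr 'C(_, 4); lia.
have hAM : A n page M = A n page (M.-1).+1 by congr (A _ _ _); lia.
have hCM : 'C(M + 2, 3) = 'C((M.-1).+3, 3) by congr 'C(_, 3); lia.
rewrite hk hCM in E2.
rewrite hAM in E1.
have LBt t : t < M -> 3 * 'C(t.+3, 3) <= A n page t.+1.
  move=> ht; apply: LB; lia.
have hS : 3 * \sum_(0 <= t < M.-1) 'C(t.+3, 3) <= \sum_(0 <= t < M.-1) A n page t.+1.
  rewrite big_distrr; apply: leq_sum_nat => t ht; apply: LBt; lia.
have hL := LBt M.-1 ltac:(lia).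
have hc : 1 <= n - 2 * M - 1 by lia.
have [eS eL] : \sum_(0 <= t < M.-1) A n page t.+1 = 3 * \sum_(0 <= t < M.-1) 'C(t.+3, 3)
   /\ A n page M.-1.+1 = 3 * 'C(M.-1.+3, 3).
  move: E1 E2 hS hL hc.
  move: (\sum_(0 <= t < M.-1) A n page t.+1) (3 * \sum_(0 <= t < M.-1) 'C(t.+3, 3))
    (A n page M.-1.+1) (3 * 'C(M.-1.+3, 3)) (n - 2 * M - 1) => a b c d e.
  move=> E1 E2 hS hL hc.
  have h : 2 * a + e * c = 2 * b + e * d by lia.
  split; nia.
move=> t ht.
case: (ltngtP t M.-1) => htM.
- rewrite big_distrr in eS.
  apply: (@sum_eq_ge M.-1 (fun t => A n page t.+1) (fun t => 3 * 'C(t.+3, 3))) => //.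
  move=> i hi; apply: LBt; lia.
- move: hM hMn ht htM; clear; lia.
- by subst t.
Qed.

Unset Implicit Arguments.

Theorem lemma11 (n : nat) (page : pages) :
  page 1 n = true ->
  cr n page = Z n ->
  forall j : nat, j + 2 <= n./2 ->
  forall k : nat, k + j + 2 <= n./2 ->
  Eleqleq (n - j) page k = 3 * 'C(k + 3, 3).
Proof.
move=> _ hcr j hj k hk.
rewrite Eleqleq_A addn3.
have hn : 4 <= n by lia.
elim: j k hj hk => [|j IH] k hj hk.
- rewrite subn0; apply: base => //; lia.
- pose m := n - j.+1.
  have hm : n - j = m.+1 by rewrite /m; lia.
  have h1 := IH k.+1 ltac:(lia) ltac:(lia).
  rewrite hm in h1.
  have h2 := @step page m k.+1 ltac:(rewrite /m; lia).
  have h3 := @LB page k m ltac:(rewrite /m; lia).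
  rewrite (binS k.+3 2) in h1.
  rewrite -/m; lia.
Qed.
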